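(* Let $f(t_1,t_2)=[t_1,t_2,t_{i_3},\ldots,t_{i_k}]$ be a left normed commutator with $i_j\in\{1,2\}$ (and $i_1=1$, $i_2=2$), with $\deg_{t_1}f=n$, $\deg_{t_2}f=m$, $n+m=k\ge 2$. Put $i=i_k$. Then $f(C_1,C_2)=(x_1'-x_1)^{n-1}(x_2'-x_2)^{m-1}A(k)$, where \[A(k)=\begin{pmatrix} F(k) & y_1(x_2'-x_2)-y_2(x_1'-x_1)\\ (-1)^k\big(y_2'(x_1'-x_1)-y_1'(x_2'-x_2)\big) & F(k)\end{pmatrix},\] \[F(k)=\frac{\big(y_1(x_2'-x_2)-y_2(x_1'-x_1)\big)y_i'+(-1)^k y_i\big(y_2'(x_1'-x_1)-y_1'(x_2'-x_2)\big)}{x_i'-x_i}.\]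
   Context: $K$ is an infinite field of characteristic different from 2. Let $X=\{x_1,x_2,x_1',x_2'\}$ and $Y=\{y_1,y_2,y_1',y_2'\}$, and let $K[X;Y]\cong K[X]\otimes_K E(Y)$ be the free supercommutative algebra: the $x$'s are even commuting variables, the $y$'s are odd pairwise anticommuting variables, and $E(Y)$ is the Grassmann algebra on the vector space with basis $Y$. The division defining $F(k)$ is performed in $K(X)\otimes_K E(Y)$, where $K(X)$ is the field of fractions of $K[X]$. Put $C_1=\begin{pmatrix} x_1&y_1\\ y_1'&x_1'\end{pmatrix}$, $C_2=\begin{pmatrix} x_2&y_2\\ y_2'&x_2'\end{pmatrix}\in M_2(K[X;Y])$. Commutators are $[a,b]=ab-ba$ and are left normed: $[a_1,\ldots,a_k]=[[a_1,\ldots,a_{k-1}],a_k]$. $t_1,t_2$ are free noncommuting variables and $f(C_1,C_2)$ denotes evaluation. *)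

(* Defs.v *)
From HB Require Import structures.
From mathcomp Require Import all_boot all_order all_algebra.
From mathcomp Require Import fraction.
From mathcomp Require Import mpoly.
Set Implicit Arguments. Unset Strict Implicit. Unset Printing Implicit Defensive.
Import Order.TTheory GRing.Theory Num.Theory.
Local Open Scope ring_scope.

(* R ⊗ E(Y) with Y = {y1,y2,y1',y2'} (indexed 0,1,2,3), R commutative.  *)
(* An element is the family of its coordinates on the basis            *)
(* e_A = y_{a1} ... y_{ar}  (a1 < ... < ar, A = {a1..ar} ⊆ 'I_4).        *)
Definition G (R : comNzRingType) := {ffun {set 'I_4} -> R}.

Section Grassmann.
Variable R : comNzRingType.

(* e_A e_B = gsign A B e_{A ∪ B} when A, B disjoint *)
Definition gsign (A B : {set 'I_4}) : R :=
  (-1) ^+ #|[set p : 'I_4 * 'I_4 | [&& p.1 \in A, p.2 \in B & (p.2 < p.1)%N]]|.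

Definition gmul (a b : G R) : G R :=
  [ffun S : {set 'I_4} => \sum_(A : {set 'I_4} | A \subset S) gsign A (S :\: A) * a A * b (S :\: A)].

Definition gconst (c : R) : G R := [ffun S : {set 'I_4} => if S == set0 then c else 0].
Definition ggen (j : 'I_4) : G R := [ffun S : {set 'I_4} => if S == [set j] then 1 else 0].
Definition gscale (c : R) (a : G R) : G R := [ffun S : {set 'I_4} => c * a S].

Definition gmx_mul (A B : 'M[G R]_2) : 'M[G R]_2 :=
  \matrix_(i, j) \sum_(l < 2) gmul (A i l) (B l j).
Definition gcomm (A B : 'M[G R]_2) : 'M[G R]_2 := gmx_mul A B - gmx_mul B A.
Definition gmx_scale (c : R) (A : 'M[G R]_2) : 'M[G R]_2 :=
  \matrix_(i, j) gscale c (A i j).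

Definition mx2 (a b c d : G R) : 'M[G R]_2 :=
  \matrix_(i, j) if i == 0 then (if j == 0 then a else b)
                 else (if j == 0 then c else d).
End Grassmann.

Definition gmap (R S : comNzRingType) (f : R -> S) (a : G R) : G S :=
  [ffun A : {set 'I_4} => f (a A)].
Definition gmx_map (R S : comNzRingType) (f : R -> S) (A : 'M[G R]_2) : 'M[G S]_2 :=
  \matrix_(i, j) gmap f (A i j).

(*   'X_0 = x1, 'X_1 = x2, 'X_2 = x1', 'X_3 = x2';                     *)
(* Y generators: 0 = y1, 1 = y2, 2 = y1', 3 = y2'.                     *)
Section Concrete.
Variable K : fieldType.
Local Notation KX := {mpoly K[4]}.
Local Notation KfX := {fraction KX}.

Definition ix (j : nat) : 'I_4 := inord j.

Definition xv (j : nat) : KX := 'X_(ix j).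

Definition Cmat (c : nat) : 'M[G KX]_2 :=
  let u := if c == 1%N then 0%N else 1%N in
  mx2 (gconst (xv u)) (ggen _ (ix u))
      (ggen _ (ix (u + 2))) (gconst (xv (u + 2))).

(* f(C_1,C_2) for f = [t_1, t_2, t_{r_1}, ..., t_{r_s}] (left normed) *)
Definition f_eval (rest : seq nat) : 'M[G KX]_2 :=
  foldl (fun acc j => gcomm acc (Cmat j)) (gcomm (Cmat 1) (Cmat 2)) rest.

Definition embX : KX -> KfX := @FracField.tofrac KX.
Definition xf (j : nat) : KfX := embX (xv j).
Definition d1 : KfX := xf 2 - xf 0.
Definition d2 : KfX := xf 3 - xf 1.
Definition yf (j : nat) : G KfX := ggen _ (ix j).

(* y1 (x2'-x2) - y2 (x1'-x1) *)
Definition alpha : G KfX := gscale d2 (yf 0) - gscale d1 (yf 1).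
(* y2' (x1'-x1) - y1' (x2'-x2) *)
Definition beta : G KfX := gscale d1 (yf 3) - gscale d2 (yf 2).

Definition Fk (k i : nat) : G KfX :=
  let u := if i == 1%N then 0%N else 1%N in
  gscale (xf (u + 2) - xf u)^-1
    (gmul alpha (yf (u + 2)) + gscale ((-1) ^+ k) (gmul (yf u) beta)).

Definition Ak (k i : nat) : 'M[G KfX]_2 :=
  mx2 (Fk k i) alpha (gscale ((-1) ^+ k) beta) (Fk k i).
End Concrete.

(* Main.v *)
Require Import Defs.
From HB Require Import structures.
From mathcomp Require Import all_boot all_order all_algebra.
From mathcomp Require Import fraction.
From mathcomp Require Import mpoly.
From mathcomp Require Import ring.
Import GRing.Theory.
Local Open Scope ring_scope.

Section Gen.
Variable R : comNzRingType.
Implicit Types a b c : G R.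

Lemma gaddE a b S : (a + b) S = a S + b S.
Proof. by rewrite !ffunE. Qed.
Lemma goppE a S : (- a) S = - a S.
Proof. by rewrite !ffunE. Qed.
Lemma gsubE a b S : (a - b) S = a S - b S.
Proof. by rewrite !ffunE. Qed.
Lemma g0E S : (0 : G R) S = 0.
Proof. by rewrite !ffunE. Qed.
Lemma gscaleE r a S : gscale r a S = r * a S.
Proof. by rewrite ffunE. Qed.

Lemma gmulE a b S : gmul a b S = \sum_(A : {set 'I_4} | A \subset S) gsign R A (S :\: A) * a A * b (S :\: A).
Proof. by rewrite ffunE. Qed.

Lemma gmulDl a b c : gmul (a + b) c = gmul a c + gmul b c.
Proof. apply/ffunP=> S; rewrite !(gaddE, gmulE) -big_split /=; apply: eq_bigr => A _.
by rewrite gaddE; ring. Qed.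
Lemma gmulDr a b c : gmul a (b + c) = gmul a b + gmul a c.
Proof. apply/ffunP=> S; rewrite !(gaddE, gmulE) -big_split /=; apply: eq_bigr => A _.
by rewrite gaddE; ring. Qed.
Lemma gmulNl a b : gmul (- a) b = - gmul a b.
Proof. apply/ffunP=> S; rewrite !(goppE, gmulE) -sumrN; apply: eq_bigr => A _.
by rewrite goppE; ring. Qed.
Lemma gmulNr a b : gmul a (- b) = - gmul a b.
Proof. apply/ffunP=> S; rewrite !(goppE, gmulE) -sumrN; apply: eq_bigr => A _.
by rewrite goppE; ring. Qed.
Lemma gmulBl a b c : gmul (a - b) c = gmul a c - gmul b c.
Proof. by rewrite gmulDl gmulNl. Qed.
Lemma gmulBr a b c : gmul a (b - c) = gmul a b - gmul a c.
Proof. by rewrite gmulDr gmulNr. Qed.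
Lemma gmulZl r a b : gmul (gscale r a) b = gscale r (gmul a b).
Proof. apply/ffunP=> S; rewrite !(gscaleE, gmulE) mulr_sumr; apply: eq_bigr => A _.
by rewrite gscaleE; ring. Qed.
Lemma gmulZr r a b : gmul a (gscale r b) = gscale r (gmul a b).
Proof. apply/ffunP=> S; rewrite !(gscaleE, gmulE) mulr_sumr; apply: eq_bigr => A _.
by rewrite gscaleE; ring. Qed.

Lemma gsign0l B : gsign R set0 B = 1.
Proof. rewrite /gsign (_ : [set _ | _] = set0) ?cards0 //.
by apply/setP => p; rewrite !inE. Qed.
Lemma gsign0r B : gsign R B set0 = 1.
Proof. rewrite /gsign (_ : [set _ | _] = set0) ?cards0 //.
by apply/setP => p; rewrite !inE andbF. Qed.

Lemma gmul_cl r a : gmul (gconst r) a = gscale r a.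
Proof. apply/ffunP=> S; rewrite gmulE gscaleE (bigD1 set0) ?sub0set //= big1.
  by rewrite ffunE eqxx gsign0l setD0 mul1r addr0.
by move=> A /andP[_ /negPf]; rewrite ffunE => ->; rewrite mulr0 mul0r. Qed.
Lemma gmul_cr r a : gmul a (gconst r) = gscale r a.
Proof. apply/ffunP=> S; rewrite gmulE gscaleE (bigD1 S) ?subxx //= big1.
  by rewrite ffunE setDv eqxx gsign0r mul1r addr0 mulrC.
move=> A /andP[AS neq]; rewrite ffunE setD_eq0.
case: ifP => [SA|_]; last by rewrite mulr0.
by move: neq; rewrite eqEsubset AS SA. Qed.
End Gen.

Section Gen2.
Variable R : comNzRingType.
Implicit Types a b c : G R.

Lemma gmul_gen_r a j S : gmul a (ggen R j) S =
  if j \in S then gsign R (S :\ j) [set j] * a (S :\ j) else 0.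
Proof.
rewrite gmulE; case: ifP => jS.
  rewrite (bigD1 (S :\ j)) ?subsetDl //= big1 ?addr0.
    by rewrite ffunE setDDr setDv set0U (setIidPr _) ?sub1set // eqxx mulr1.
  move=> A /andP[AS nA]; rewrite ffunE; case: eqP => [E|_]; last by rewrite mulr0.
  by move: nA; rewrite -E setDDr setDv set0U (setIidPr AS) eqxx.
rewrite big1 // => A AS; rewrite ffunE; case: eqP => [E|_]; last by rewrite mulr0.
have : j \in S :\: A by rewrite E set11.
by rewrite inE jS andbF.
Qed.

Lemma gmul_gen_l a j S : gmul (ggen R j) a S =
  if j \in S then gsign R [set j] (S :\ j) * a (S :\ j) else 0.
Proof.
rewrite gmulE; case: ifP => jS.
  rewrite (bigD1 [set j]); last by rewrite sub1set.
  rewrite /= big1 ?addr0; first by rewrite ffunE eqxx mulr1.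
  by move=> A /andP[AS nA]; rewrite ffunE (negPf nA) mulr0 mul0r.
rewrite big1 // => A AS; rewrite ffunE; case: eqP => [E|_]; last by rewrite mulr0 mul0r.
by move: AS jS; rewrite E sub1set => ->.
Qed.

Definition geven a := forall S : {set 'I_4}, odd #|S| -> a S = 0.

Lemma gsign_card (B : {set 'I_4}) (j : 'I_4) : j \notin B ->
  (#|[set p : 'I_4 * 'I_4 | [&& p.1 \in B, p.2 \in [set j] & (p.2 < p.1)%N]]|
  + #|[set p : 'I_4 * 'I_4 | [&& p.1 \in [set j], p.2 \in B & (p.2 < p.1)%N]]| = #|B|)%N.
Proof.
move=> jB.
have -> : [set p : 'I_4 * 'I_4 | [&& p.1 \in B, p.2 \in [set j] & (p.2 < p.1)%N]]
  = (fun b : 'I_4 => (b, j)) @: (B :&: [set b : 'I_4 | (j < b)%N]).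
  apply/setP => -[x y]; rewrite !inE /=; apply/idP/imsetP.
    by case/and3P => xB /eqP -> lt; exists x; rewrite // !inE xB.
  by case=> b; rewrite !inE => /andP[bB lt] [-> ->]; rewrite bB eqxx.
have -> : [set p : 'I_4 * 'I_4 | [&& p.1 \in [set j], p.2 \in B & (p.2 < p.1)%N]]
  = (fun b : 'I_4 => (j, b)) @: (B :\: [set b : 'I_4 | (j < b)%N]).
  apply/setP => -[x y]; rewrite !inE /=; apply/idP/imsetP.
    case/and3P => /eqP -> yB lt; exists y; rewrite // !inE yB andbT -leqNgt ltnW //.
  case=> b; rewrite !inE => /andP[nlt bB] [-> ->]; rewrite bB eqxx /=.
  rewrite ltn_neqAle leqNgt nlt andbT; apply/eqP => e.
  by move: jB; rewrite (_ : j = b) ?bB //; apply: val_inj.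
rewrite !card_imset; first by rewrite cardsID.
  by move=> x y [].
by move=> x y [].
Qed.

Lemma geven_comm a j : geven a -> gmul a (ggen R j) = gmul (ggen R j) a.
Proof.
move=> ea; apply/ffunP => S; rewrite gmul_gen_r gmul_gen_l; case: ifP => // jS.
case: (boolP (odd #|S :\ j|)) => od; first by rewrite ea ?mulr0.
congr (_ * _); rewrite /gsign -signr_odd -[in RHS]signr_odd; congr (_ ^+ _).
have := @gsign_card (S :\ j) j; rewrite setD11 => /(_ isT) E.
by move: od; rewrite -E oddD; case: odd; case: odd.
Qed.
End Gen2.

Arguments geven {R} a.
Section Gen3.
Variable R : comNzRingType.
Implicit Types a b c : G R.

Lemma gsign11 (i j : 'I_4) : gsign R [set i] [set j] = (-1) ^+ (j < i)%N.
Proof.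
rewrite /gsign; congr (_ ^+ _).
case: (boolP (j < i)%N) => ji.
  rewrite (_ : [set _ | _] = [set (i, j)]) ?cards1 //.
  by apply/setP => -[x y]; rewrite !inE /= xpair_eqE; case: eqP => [->|] //=; case: eqP => [->|]; rewrite ?ji ?andbF.
rewrite (_ : [set _ | _] = set0) ?cards0 //.
move/negbTE: ji => ji.
by apply/setP => -[x y]; rewrite !inE /=; case: eqP => [->|] //=; case: eqP => [->|]; rewrite ?ji ?andbF.
Qed.

Lemma gyy i j : gmul (ggen R i) (ggen R j) =
  [ffun S => if (S == [set i; j]) && (i != j) then gsign R [set i] [set j] else 0].
Proof.
apply/ffunP => S; rewrite gmul_gen_l !ffunE.
case: ifP => iS.
  case: eqP => E.
    have jS : j \in S :\ i by rewrite E set11.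
    have ij : i != j by move: jS; rewrite !inE => /andP[]; rewrite eq_sym.
    have -> : S = [set i; j].
      apply/setP => x; rewrite !inE; case: (eqVneq x i) => [->|xi] //=.
      by rewrite -in_set1 -E !inE xi.
    by rewrite eqxx ij /= setU1K ?mulr1 // inE ij.
  rewrite mulr0; case: (eqVneq S [set i; j]) => //= E2; case: (eqVneq i j) => //= ij.
  by case: E; rewrite E2 setU1K // inE ij.
case: (eqVneq S [set i; j]) => //= E3; by move: iS; rewrite E3 set21.
Qed.

Lemma gyy0 i : gmul (ggen R i) (ggen R i) = 0.
Proof. by apply/ffunP => S; rewrite gyy !ffunE eqxx andbF. Qed.

Lemma gyyA i j : gmul (ggen R i) (ggen R j) = - gmul (ggen R j) (ggen R i).
Proof.
apply/ffunP => S; rewrite !gyy !ffunE setUC eq_sym.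
case: (eqVneq i j) => [->|ij]; rewrite ?andbF ?oppr0 //= andbT.
case: eqP => _; rewrite ?oppr0 // !gsign11.
case: (ltngtP i j) => e; rewrite ?opprK //.
by case/eqP: ij; apply: val_inj.
Qed.

Lemma geven_yy i j : geven (gmul (ggen R i) (ggen R j)).
Proof.
move=> S oS; rewrite gyy ffunE; case: eqP => //= E; case: (eqVneq i j) => //= ij.
by move: oS; rewrite E cards2 ij.
Qed.
Lemma geven_add a b : geven a -> geven b -> geven (a + b).
Proof. by move=> ea eb S oS; rewrite gaddE ea ?eb ?addr0. Qed.
Lemma geven_opp a : geven a -> geven (- a).
Proof. by move=> ea S oS; rewrite goppE ea ?oppr0. Qed.
Lemma geven_sub a b : geven a -> geven b -> geven (a - b).
Proof. by move=> ea eb; apply: geven_add => //; apply: geven_opp. Qed.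
Lemma geven_scale r a : geven a -> geven (gscale r a).
Proof. by move=> ea S oS; rewrite gscaleE ea ?mulr0. Qed.
End Gen3.

Section Mx.
Variable R : comNzRingType.
Implicit Types a b c d : G R.

Lemma ord2_cases (i : 'I_2) : i = 0 \/ i = 1.
Proof. by case: i => [[|[|//]] Hi]; [left|right]; apply: val_inj. Qed.

Lemma big_ord2 (F : 'I_2 -> G R) : \sum_(l < 2) F l = F 0 + F 1.
Proof. by rewrite big_ord_recl big_ord1; congr (_ + _); congr F; apply: val_inj. Qed.

Lemma mx2_ext (A B : 'M[G R]_2) :
  A 0 0 = B 0 0 -> A 0 1 = B 0 1 -> A 1 0 = B 1 0 -> A 1 1 = B 1 1 -> A = B.
Proof.
move=> e00 e01 e10 e11; apply/matrixP => i j.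
by case: (ord2_cases i) => ->; case: (ord2_cases j) => ->.
Qed.

Lemma mx2E a b c d :
  (mx2 a b c d 0 0 = a) * (mx2 a b c d 0 1 = b) * (mx2 a b c d 1 0 = c) * (mx2 a b c d 1 1 = d).
Proof. by rewrite !mxE. Qed.

Lemma mx2_mul a b c d a' b' c' d' :
  gmx_mul (mx2 a b c d) (mx2 a' b' c' d') =
  mx2 (gmul a a' + gmul b c') (gmul a b' + gmul b d') (gmul c a' + gmul d c') (gmul c b' + gmul d d').
Proof. by apply: mx2_ext; rewrite !mxE !big_ord2 !mxE. Qed.

Lemma mx2_sub a b c d a' b' c' d' :
  mx2 a b c d - mx2 a' b' c' d' = mx2 (a - a') (b - b') (c - c') (d - d').
Proof. by apply: mx2_ext; rewrite !mxE. Qed.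

Lemma mx2_comm a b c d a' b' c' d' :
  gcomm (mx2 a b c d) (mx2 a' b' c' d') =
  mx2 (gmul a a' + gmul b c' - (gmul a' a + gmul b' c))
      (gmul a b' + gmul b d' - (gmul a' b + gmul b' d))
      (gmul c a' + gmul d c' - (gmul c' a + gmul d' c))
      (gmul c b' + gmul d d' - (gmul c' b + gmul d' d)).
Proof. by rewrite /gcomm !mx2_mul mx2_sub. Qed.

Lemma mx2_scale r a b c d :
  gmx_scale r (mx2 a b c d) = mx2 (gscale r a) (gscale r b) (gscale r c) (gscale r d).
Proof. by apply: mx2_ext; rewrite !mxE. Qed.
End Mx.

Section Map.
Lemma big_ord2' (R : comNzRingType) (F : 'I_2 -> G R) : \sum_(l < 2) F l = F 0 + F 1.
Proof. by rewrite big_ord_recl big_ord1; congr (_ + _); congr F; apply: val_inj. Qed.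
Variables (R S : comNzRingType) (f : {rmorphism R -> S}).

Lemma gmap_mul (a b : G R) : gmap f (gmul a b) = gmul (gmap f a) (gmap f b).
Proof.
apply/ffunP => T; rewrite !ffunE rmorph_sum; apply: eq_bigr => A _.
by rewrite !ffunE !rmorphM /gsign rmorphXn rmorphN1.
Qed.
Lemma gmap_add (a b : G R) : gmap f (a + b) = gmap f a + gmap f b.
Proof. by apply/ffunP => T; rewrite !ffunE rmorphD. Qed.
Lemma gmap_sub (a b : G R) : gmap f (a - b) = gmap f a - gmap f b.
Proof. by apply/ffunP => T; rewrite !ffunE rmorphB. Qed.
Lemma gmap_const r : gmap f (gconst r) = gconst (f r).
Proof. by apply/ffunP => T; rewrite !ffunE; case: ifP; rewrite ?rmorph0. Qed.
Lemma gmap_gen j : gmap f (ggen R j) = ggen S j.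
Proof. by apply/ffunP => T; rewrite !ffunE; case: ifP; rewrite ?rmorph0 ?rmorph1. Qed.

Lemma gmx_map_mx2 (a b c d : G R) :
  gmx_map f (mx2 a b c d) = mx2 (gmap f a) (gmap f b) (gmap f c) (gmap f d).
Proof. by apply: mx2_ext; rewrite !mxE. Qed.

Lemma gmx_map_comm (A B : 'M[G R]_2) :
  gmx_map f (gcomm A B) = gcomm (gmx_map f A) (gmx_map f B).
Proof.
by apply/matrixP => i j; rewrite !mxE gmap_sub !big_ord2' !gmap_add !gmap_mul /gmx_map !mxE.
Qed.
End Map.

Section Lin.
Variable R : comNzRingType.
Lemma gconstE (r : R) S : gconst r S = (S == set0)%:R * r.
Proof. by rewrite ffunE; case: (S == set0); rewrite ?mul1r ?mul0r. Qed.

Lemma lin_anti p q i l j :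
  gmul (gscale p (ggen R i) - gscale q (ggen R l)) (ggen R j) =
  - gmul (ggen R j) (gscale p (ggen R i) - gscale q (ggen R l)).
Proof.
rewrite gmulBl gmulBr !gmulZl !gmulZr (gyyA _ i j) (gyyA _ l j).
by apply/ffunP => S; rewrite !(gsubE, goppE, gscaleE); ring.
Qed.

Lemma lin_even_l p q i l j :
  geven (gmul (gscale p (ggen R i) - gscale q (ggen R l)) (ggen R j)).
Proof.
rewrite gmulBl !gmulZl; apply: geven_sub; apply: geven_scale; exact: geven_yy.
Qed.
Lemma lin_even_r p q i l j :
  geven (gmul (ggen R j) (gscale p (ggen R i) - gscale q (ggen R l))).
Proof.
rewrite gmulBr !gmulZr; apply: geven_sub; apply: geven_scale; exact: geven_yy.
Qed.
End Lin.

Section Conc.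
Variable K : fieldType.
Local Notation KX := {mpoly K[4]}.
Local Notation KfX := {fraction KX}.

Lemma ix_neq {a b : nat} : (a < 4)%N -> (b < 4)%N -> a != b -> ix a != ix b.
Proof.
move=> ha hb ab; apply: contra ab => /eqP/(congr1 (@nat_of_ord 4)).
by rewrite /ix !inordK // => ->.
Qed.

Lemma xdiff_neq0 (a b : nat) : (a < 4)%N -> (b < 4)%N -> a != b -> xf K a - xf K b != 0.
Proof.
move=> ha hb ab; rewrite /xf /embX -rmorphB tofrac_eq0.
apply/eqP => /(congr1 (fun p : KX => p@_(U_(ix a))%MM)).
rewrite mcoeffB /xv !mcoeffXU eqxx eq_sym (negPf (ix_neq ha hb ab)) subr0 mcoeff0 => /eqP.
by rewrite oner_eq0.
Qed.

Lemma d1_neq0 : d1 K != 0. Proof. exact: xdiff_neq0. Qed.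
Lemma d2_neq0 : d2 K != 0. Proof. exact: xdiff_neq0. Qed.
End Conc.

Section Step.
Variable K : fieldType.
Local Notation KX := {mpoly K[4]}.
Local Notation KfX := {fraction KX}.

Definition uu (j : nat) : nat := if j == 1%N then 0%N else 1%N.
Definition dd (j : nat) : KfX := xf K (uu j + 2) - xf K (uu j).
Definition Cm (j : nat) : 'M[G KfX]_2 := gmx_map (@embX K) (Cmat K j).

Lemma CmE j : Cm j = mx2 (gconst (xf K (uu j))) (yf K (uu j)) (yf K (uu j + 2)) (gconst (xf K (uu j + 2))).
Proof. by rewrite /Cm /Cmat /embX gmx_map_mx2 !gmap_const !gmap_gen. Qed.

Lemma dd_neq0 j : dd j != 0.
Proof. by rewrite /dd /uu; case: (j == 1%N); apply: xdiff_neq0. Qed.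

Lemma Fk_even k i : geven (Fk K k i).
Proof.
rewrite /Fk; apply: geven_scale; apply: geven_add; last apply: geven_scale.
  exact: lin_even_l.
exact: lin_even_r.
Qed.

End Step.

Section StepGen.
Variable R : fieldType.
Lemma step_gen (F al be : G R) (c x x' : R) (k : nat) (a a' : 'I_4) :
  geven F -> x' - x != 0 ->
  gmul be (ggen R a) = - gmul (ggen R a) be ->
  gmul (ggen R a') al = - gmul al (ggen R a') ->
  gcomm (mx2 (gscale c F) (gscale c al) (gscale c (gscale ((-1) ^+ k) be)) (gscale c F))
        (mx2 (gconst x) (ggen R a) (ggen R a') (gconst x'))
  = mx2 (gscale (c * (x' - x)) (gscale (x' - x)^-1 (gmul al (ggen R a') + gscale ((-1) ^+ k.+1) (gmul (ggen R a) be))))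
        (gscale (c * (x' - x)) al)
        (gscale (c * (x' - x)) (gscale ((-1) ^+ k.+1) be))
        (gscale (c * (x' - x)) (gscale (x' - x)^-1 (gmul al (ggen R a') + gscale ((-1) ^+ k.+1) (gmul (ggen R a) be)))).
Proof.
move=> eF dn ab aa.
rewrite mx2_comm; congr (mx2 _ _ _ _).
- rewrite !gmul_cl !gmul_cr !gmulZl !gmulZr.
  apply/ffunP => S; rewrite !(gsubE, gaddE, goppE, gscaleE) exprS.
  by field.
- rewrite !gmul_cl !gmul_cr !gmulZl !gmulZr (geven_comm _ _ _ eF).
  by apply/ffunP => S; rewrite !(gsubE, gaddE, goppE, gscaleE); ring.
- rewrite !gmul_cl !gmul_cr !gmulZl !gmulZr (geven_comm _ _ _ eF).
  by apply/ffunP => S; rewrite !(gsubE, gaddE, goppE, gscaleE) exprS; ring.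
- rewrite !gmul_cl !gmul_cr !gmulZl !gmulZr ab aa.
  apply/ffunP => S; rewrite !(gsubE, gaddE, goppE, gscaleE) exprS.
  by field.
Qed.
End StepGen.

Section Step2.
Variable K : fieldType.
Local Notation KX := {mpoly K[4]}.
Local Notation KfX := {fraction KX}.

Lemma step (F : G KfX) (c : KfX) k j : geven F ->
  gcomm (mx2 (gscale c F) (gscale c (alpha K)) (gscale c (gscale ((-1) ^+ k) (beta K))) (gscale c F)) (Cm K j)
  = gmx_scale (c * dd K j) (Ak K k.+1 j).
Proof.
move=> eF; rewrite CmE /Ak mx2_scale /Fk /dd.
apply: step_gen => //.
- exact: (dd_neq0 K j).
- rewrite /beta /yf; exact: lin_anti.
- rewrite /alpha /yf; symmetry; rewrite lin_anti opprK //.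
Qed.
End Step2.

Section BaseGen.
Variable R : fieldType.
Lemma base_gen (x0 x1 x2 x3 : R) (i0 i1 i2 i3 : 'I_4) : x3 - x1 != 0 ->
  gcomm (mx2 (gconst x0) (ggen R i0) (ggen R i2) (gconst x2))
        (mx2 (gconst x1) (ggen R i1) (ggen R i3) (gconst x3)) =
  mx2 (gscale 1 (gscale (x3 - x1)^-1
         (gmul (gscale (x3 - x1) (ggen R i0) - gscale (x2 - x0) (ggen R i1)) (ggen R i3)
          + gscale ((-1) ^+ 2) (gmul (ggen R i1) (gscale (x2 - x0) (ggen R i3) - gscale (x3 - x1) (ggen R i2))))))
      (gscale 1 (gscale (x3 - x1) (ggen R i0) - gscale (x2 - x0) (ggen R i1)))
      (gscale 1 (gscale ((-1) ^+ 2) (gscale (x2 - x0) (ggen R i3) - gscale (x3 - x1) (ggen R i2))))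
      (gscale 1 (gscale (x3 - x1)^-1
         (gmul (gscale (x3 - x1) (ggen R i0) - gscale (x2 - x0) (ggen R i1)) (ggen R i3)
          + gscale ((-1) ^+ 2) (gmul (ggen R i1) (gscale (x2 - x0) (ggen R i3) - gscale (x3 - x1) (ggen R i2)))))).
Proof.
move=> dn; rewrite mx2_comm; congr (mx2 _ _ _ _).
- rewrite !gmul_cl !gmulBl !gmulBr !gmulZl !gmulZr.
  apply/ffunP => S; rewrite !(gsubE, gaddE, goppE, gscaleE, gconstE).
  by field.
- rewrite !gmul_cl !gmul_cr.
  by apply/ffunP => S; rewrite !(gsubE, gaddE, goppE, gscaleE); ring.
- rewrite !gmul_cl !gmul_cr.
  by apply/ffunP => S; rewrite !(gsubE, gaddE, goppE, gscaleE); ring.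
- rewrite !gmul_cl !gmulBl !gmulBr !gmulZl !gmulZr (gyyA _ i2 i1) (gyyA _ i3 i0).
  apply/ffunP => S; rewrite !(gsubE, gaddE, goppE, gscaleE, gconstE).
  by field.
Qed.
End BaseGen.

Section Main.
Variable K : fieldType.
Local Notation KX := {mpoly K[4]}.
Local Notation KfX := {fraction KX}.

Lemma base : gcomm (Cm K 1) (Cm K 2) = gmx_scale 1 (Ak K 2 2).
Proof.
rewrite !CmE /Ak mx2_scale /Fk /alpha /beta /d1 /d2 /yf.
apply: base_gen.
exact: (dd_neq0 K 2).
Qed.
End Main.

Section Ind.
Variable K : fieldType.
Local Notation KX := {mpoly K[4]}.
Local Notation KfX := {fraction KX}.

Lemma map_comm0 (A B : 'M[G KX]_2) :
  gmx_map (@embX K) (gcomm A B) = gcomm (gmx_map (@embX K) A) (gmx_map (@embX K) B).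
Proof. rewrite /embX; exact: gmx_map_comm. Qed.

Lemma map_foldl rest (a : 'M[G KX]_2) :
  gmx_map (@embX K) (foldl (fun acc j => gcomm acc (Cmat K j)) a rest) =
  foldl (fun acc j => gcomm acc (Cm K j)) (gmx_map (@embX K) a) rest.
Proof. by elim: rest a => //= j rest IH a; rewrite IH map_comm0. Qed.

Lemma main_ind rest c k i : all (fun j => (j == 1%N) || (j == 2%N)) rest ->
  foldl (fun acc j => gcomm acc (Cm K j)) (gmx_scale c (Ak K k i)) rest =
  gmx_scale (c * d1 K ^+ count (pred1 1%N) rest * d2 K ^+ count (pred1 2%N) rest)
            (Ak K (k + size rest) (last i rest)).
Proof.
elim: rest c k i => [|j rest IH] c k i /=.
  by rewrite !expr0 !mulr1 addn0.
case/andP => hj hr.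
have -> : gcomm (gmx_scale c (Ak K k i)) (Cm K j) = gmx_scale (c * dd K j) (Ak K k.+1 j).
  by rewrite {1}/Ak mx2_scale; apply: step; apply: Fk_even.
rewrite (IH _ _ _ hr) (addSnnS k (size rest)); congr (gmx_scale _ _).
case/orP: hj => /eqP ->; rewrite /dd /uu /d1 /d2 /=; rewrite ?add0n ?add1n !exprS; ring.
Qed.
End Ind.

Theorem lemma6 (K : fieldType)
  (K_infinite : forall s : seq K, exists x : K, x \notin s)
  (K_char : (2%:R : K) != 0)
  (rest : seq nat) (Hrest : all (fun j => (j == 1%N) || (j == 2%N)) rest) :
  let idx := [:: 1%N, 2%N & rest] in
  let n := count (pred1 1%N) idx in
  let m := count (pred1 2%N) idx in
  let k := size idx in
  let i := last 2%N rest in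
  gmx_map (@embX K) (f_eval K rest) =
  gmx_scale (d1 K ^+ (n - 1) * d2 K ^+ (m - 1)) (Ak K k i).
Proof.
move=> idx n m k i.
rewrite /f_eval map_foldl map_comm0 -/(Cm K 1) -/(Cm K 2) base (main_ind _ _ _ _ _ Hrest).
congr (gmx_scale _ _).
rewrite mul1r; congr (_ ^+ _ * _ ^+ _).
  by rewrite /n /= subn1.
by rewrite /m /= subn1.
Qed.
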